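(* Let $C$ be a compact convex polyhedron in $\mathbb R^n$ and $W$ a linear subspace of $\mathbb R^n$, and set $\operatorname{dep}(C,W)=\{x\in C : (x+W)\cap C^{\circ}\neq\emptyset\}$, where $C^\circ$ is the relative interior of $C$. If $D$ is a face of $C$, then $D\cap\operatorname{dep}(C,W)$ is either empty or contains the relative interior $D^\circ$ of $D$. *)

(* Defs.v *)
From HB Require Import structures.
From mathcomp Require Import all_boot all_order all_algebra.
From mathcomp Require Import classical_sets reals.
Set Implicit Arguments. Unset Strict Implicit. Unset Printing Implicit Defensive.
Import Order.TTheory GRing.Theory Num.Theory.
Local Open Scope ring_scope.
Local Open Scope classical_set_scope.

Section Defs.
Variables (R : realType) (n : nat).
Local Notation V := 'rV[R]_n.

Definition dotv (u v : V) : R := \sum_(i < n) u 0 i * v 0 i.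

(* compact convex polyhedron: a bounded intersection of finitely many closed
   half-spaces (such a set is closed, hence compact iff bounded) *)
Definition is_compact_polyhedron (C : set V) : Prop :=
  (exists (m : nat) (A : 'I_m -> V) (b : 'I_m -> R),
      C = [set x | forall i, dotv (A i) x <= b i]) /\
  (exists M : R, forall x, C x -> dotv x x <= M).

(* faces: intersections of C with a supporting (or trivial) hyperplane;
   c = 0, d = 0 gives C itself, c = 0, d = 1 gives the empty face *)
Definition is_face (C D : set V) : Prop :=
  exists (c : V) (d : R), (forall x, C x -> dotv c x <= d) /\
     D = [set x | C x /\ dotv c x = d].

Definition aff_hull (S : set V) : set V :=
  [set x | exists (k : nat) (p : 'I_k -> V) (l : 'I_k -> R),
      (forall i, S (p i)) /\ \sum_(i < k) l i = 1 /\ x = \sum_(i < k) l i *: p i].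

Definition relint (S : set V) : set V :=
  [set x | S x /\ exists e : R, 0 < e /\
      forall y, aff_hull S y -> dotv (y - x) (y - x) < e ^+ 2 -> S y].

Definition dep (C : set V) (W : {vspace V}) : set V :=
  [set x | C x /\ exists w, w \in W /\ relint C (x + w)].

End Defs.

(* Main.v *)
Require Import Defs.
From HB Require Import structures.
From mathcomp Require Import all_boot all_order all_algebra.
From mathcomp Require Import classical_sets reals.
From mathcomp Require Import boolp ring lra.
Import Order.TTheory GRing.Theory Num.Theory.
Local Open Scope ring_scope.
Local Open Scope classical_set_scope.

Section Aux.
Variables (R : realType) (n : nat).
Local Notation V := 'rV[R]_n.

Lemma dotvDr (u v w : V) : dotv u (v + w) = dotv u v + dotv u w.
Proof. rewrite /dotv -big_split /=; apply: eq_bigr => i _; by rewrite mxE mulrDr. Qed.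

Lemma dotvZr (u v : V) c : dotv u (c *: v) = c * dotv u v.
Proof. rewrite /dotv mulr_sumr; apply: eq_bigr => i _; by rewrite mxE mulrCA. Qed.

Lemma dotvZZ (u : V) c : dotv (c *: u) (c *: u) = c ^+ 2 * dotv u u.
Proof. rewrite /dotv mulr_sumr; apply: eq_bigr => i _; rewrite !mxE; by rewrite expr2 -!mulrA; congr (_ * _); rewrite mulrCA. Qed.

Lemma dotv_ge0 (u : V) : 0 <= dotv u u.
Proof. rewrite /dotv; apply: sumr_ge0 => i _; nra. Qed.

Definition convexS (C : set V) := forall a b l, C a -> C b -> 0 <= l -> l <= 1 ->
  C ((1 - l) *: a + l *: b).

Lemma poly_convex (C : set V) : is_compact_polyhedron C -> convexS C.
Proof.
move=> [[m [A [b ->]]] _] x y l Hx Hy l0 l1 i /=.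
rewrite dotvDr !dotvZr.
move: (Hx i) (Hy i) => hx hy; nra.
Qed.

Lemma relint_conv (C : set V) a b l : convexS C -> C a -> relint C b ->
  0 < l -> l <= 1 -> relint C ((1 - l) *: a + l *: b).
Proof.
move=> cvx Ca [Cb [e [e0 He]]] l0 l1.
split; first exact: (cvx _ _ _ Ca Cb (ltW l0) l1).
exists (l * e); split; first exact: mulr_gt0.
move=> y [k [p [lc [Hp [Hs Hy]]]]] Hd.
pose b' := l^-1 *: y - ((1 - l) / l) *: a.
have ln0 : l != 0 by rewrite gt_eqF.
have Hb' : C b'.
  apply: He.
    exists k.+1, (fun i => if unlift ord0 i is Some j then p j else a),
      (fun i => if unlift ord0 i is Some j then l^-1 * lc j else - ((1 - l) / l)).
    split; first by move=> i; case: (unlift ord0 i).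
    rewrite !big_ord_recl /= unlift_none.
    split.
      under eq_bigr do rewrite liftK.
      rewrite -mulr_sumr Hs; field; done.
    under eq_bigr do rewrite liftK.
    rewrite /b' Hy -scalerA scaler_sumr.
    under [X in _ = _ + X]eq_bigr do rewrite -scalerA.
    by rewrite scalerA -scaleNr addrC.
  have -> : b' - b = l^-1 *: (y - ((1 - l) *: a + l *: b)).
    apply/rowP => i; rewrite /b' !mxE; field; done.
  rewrite dotvZZ.
  have H0 := dotv_ge0 (y - ((1 - l) *: a + l *: b)).
  set N := dotv _ _ in Hd H0 *.
  have : N < l ^+ 2 * e ^+ 2 by rewrite -exprMn.
  move=> HN.
  have li : l^-1 * l = 1 by rewrite mulVf.
  have lip : 0 < l^-1 by rewrite invr_gt0.
  have -> : e ^+ 2 = l^-1 ^+ 2 * (l ^+ 2 * e ^+ 2).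
    rewrite mulrA -exprMn li; ring.
  rewrite ltr_pM2l //; exact: exprn_gt0.
have -> : y = (1 - l) *: a + l *: b'.
  apply/rowP => i; rewrite /b' !mxE; field; done.
apply: cvx => //; lra.
Qed.

End Aux.

Theorem mainTheorem5 (R : realType) (n : nat) (C : set 'rV[R]_n)
    (W : {vspace 'rV[R]_n}) (D : set 'rV[R]_n) :
  is_compact_polyhedron C -> is_face C D ->
  (D `&` dep C W = set0) \/ (relint D `<=` D `&` dep C W).
Proof.
move=> HC HF.
have cvx := @poly_convex R n C HC.
case: (pselect (exists x, (D `&` dep C W) x)) => [[x0 [Dx0 [Cx0 [w0 [Hw0 Hrel]]]]]|Hno]; last first.
  left; apply/funext => x; apply/propext; split => // Hx; exfalso; apply: Hno; by exists x.
right => y Hy; split; first by case: Hy.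
have DC : forall x, D x -> C x.
  by case: HF => c [d [_ ->]] x [].
case: Hy => [Dy [e [e0 He]]].
pose N := dotv (y - x0) (y - x0).
have N0 : 0 <= N := @dotv_ge0 R n (y - x0).
pose t := e / (1 + N).
have t0 : 0 < t by rewrite /t divr_gt0 //; lra.
have et : e = t * (1 + N) by rewrite /t mulfVK //; rewrite gt_eqF //; lra.
pose z := y + t *: (y - x0).
have Dz : D z.
  apply: He.
    exists 2, (fun i : 'I_2 => if i == ord0 then y else x0),
      (fun i : 'I_2 => if i == ord0 then 1 + t else - t).
    split; first by move=> i; case: (i == ord0).
    rewrite !big_ord_recl !big_ord0 /=; split; first ring.
    apply/rowP => i; rewrite /z !mxE; ring.
  have -> : z - y = t *: (y - x0) by rewrite /z addrC addKr.
  rewrite dotvZZ -/N et; nra.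
split; first exact: DC.
pose mu := t / (1 + t).
exists (mu *: w0); split; first exact: memvZ.
have -> : y + mu *: w0 = (1 - mu) *: z + mu *: (x0 + w0).
  apply/rowP => i; rewrite /z /mu !mxE; field; lra.
apply: relint_conv => //; first exact: DC.
  by rewrite /mu divr_gt0 //; lra.
rewrite /mu ler_pdivrMr; lra.
Qed.
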